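(* Let $C=\{c_1,\dots,c_N\}\subset\mathbb{R}^d$ be an arbitrary finite set of centers and $P\subset\mathbb{R}^d$ an arbitrary finite nonempty set with $\mathrm{cost}(P,C)>0$. Pick a random point $c\in P$ with $\Pr(c=x)=\mathrm{cost}(x,C)/\mathrm{cost}(P,C)$ for $x\in P$, and let $C'=C\cup\{c\}$. Then $\mathbb{E}_c[\mathrm{cost}(P,C')]\le 5\,\mathrm{OPT}_1(P)$.
   Context: For a finite set $C\subset\mathbb{R}^d$ and a point $x$, $\mathrm{cost}(x,C)=\min_{c\in C}\|x-c\|^2$; for a finite set $\mathbf{Y}$, $\mathrm{cost}(\mathbf{Y},C)=\sum_{x\in\mathbf{Y}}\mathrm{cost}(x,C)$; $\mathrm{OPT}_1(\mathbf{Y})=\min_{z\in\mathbb{R}^d}\mathrm{cost}(\mathbf{Y},\{z\})$. *)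

(* Defs.v *)
From HB Require Import structures.
From mathcomp Require Import all_boot all_order all_algebra.
From mathcomp Require Import boolp classical_sets reals.
Set Implicit Arguments. Unset Strict Implicit. Unset Printing Implicit Defensive.
Import Order.TTheory GRing.Theory Num.Theory.
Local Open Scope ring_scope.
Local Open Scope classical_set_scope.

Section Defs.
Variables (R : realType) (d : nat).
Notation pt := 'rV[R]_d.

Definition sqdist (x y : pt) : R := \sum_(i < d) ((x - y) 0 i) ^+ 2.

(* cost(x, C) = min_{c in C} ||x - c||^2, for a nonempty finite set C
   (given as a sequence; for empty C the value is meaningless). *)
Definition cost_pt (x : pt) (C : seq pt) : R :=
  \big[Num.min/ sqdist x (head x C)]_(c <- C) sqdist x c.

Definition cost (Y C : seq pt) : R := \sum_(x <- Y) cost_pt x C.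

Definition OPT1 (Y : seq pt) : R := inf [set cost Y [:: z] | z in [set: pt]].

Definition expected_cost_after_D2 (P C : seq pt) : R :=
  \sum_(x <- P) (cost_pt x C / cost P C) * cost P (x :: C).
End Defs.

(* Main.v *)
Require Import Defs.
From HB Require Import structures.
From mathcomp Require Import all_boot all_order all_algebra.
From mathcomp Require Import boolp classical_sets reals.
From mathcomp Require Import ring lra.
Import Order.TTheory GRing.Theory Num.Theory.
Local Open Scope ring_scope.

Set Implicit Arguments.
Section Aux.
Variables (R : realType) (d : nat).
Notation pt := 'rV[R]_d.

Lemma bigmin_le (F : pt -> R) (i : R) (s : seq pt) k :
  k \in s -> \big[Num.min/i]_(c <- s) F c <= F k.
Proof.
elim: s => [|a s IH] //=; rewrite inE big_cons => /orP [/eqP ->|ks].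
  by rewrite ge_min lexx.
by rewrite ge_min (IH ks) orbT.
Qed.

Lemma bigmin_attained (F : pt -> R) (i : R) (s : seq pt) :
  \big[Num.min/i]_(c <- s) F c = i \/
  exists2 k, k \in s & \big[Num.min/i]_(c <- s) F c = F k.
Proof.
elim: s => [|a s IH]; first by left; rewrite big_nil.
rewrite big_cons; case: (leP (F a) (\big[Num.min/i]_(c <- s) F c)) => h.
  by right; exists a; rewrite ?mem_head.
case: IH => [->|[k ks ->]]; first by left.
by right; exists k; rewrite // inE ks orbT.
Qed.

Lemma cost_pt_le (x k : pt) (C : seq pt) : k \in C -> cost_pt x C <= sqdist x k.
Proof. exact: bigmin_le. Qed.

Lemma cost_pt_att (x : pt) (C : seq pt) : (0 < size C)%N ->
  exists2 k, k \in C & cost_pt x C = sqdist x k.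
Proof.
case: C => [|a C] // _; rewrite /cost_pt /=.
case: (bigmin_attained (sqdist x) (sqdist x a) (a :: C)) => [->|//].
by exists a; rewrite ?mem_head.
Qed.

Lemma sqdist_ge0 (x y : pt) : 0 <= sqdist x y.
Proof. by apply: sumr_ge0 => i _; rewrite sqr_ge0. Qed.

Lemma cost_pt_ge0 (x : pt) C : (0 < size C)%N -> 0 <= cost_pt x C.
Proof. by move=> /(cost_pt_att x C) [k _ ->]; apply: sqdist_ge0. Qed.

Lemma tri (x c k : pt) : sqdist c k <= 2 * sqdist x k + 2 * sqdist x c.
Proof.
rewrite /sqdist !mulr_sumr -big_split /=; apply: ler_sum => i _.
rewrite !mxE.
set a := x 0 i; set b := c 0 i; set e := k 0 i.
have h : 0 <= (a - b + (a - e)) ^+ 2 by rewrite sqr_ge0.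
nra.
Qed.

Lemma cost_tri (x c : pt) C : (0 < size C)%N ->
  cost_pt c C <= 2 * cost_pt x C + 2 * sqdist x c.
Proof.
move=> /(cost_pt_att x C) [k kC ->].
exact: le_trans (cost_pt_le c k C kC) (tri x c k).
Qed.

Lemma cost_cons_le (x c : pt) C : (0 < size C)%N ->
  cost_pt x (c :: C) <= cost_pt x C /\ cost_pt x (c :: C) <= sqdist x c.
Proof.
move=> /(cost_pt_att x C) [k kC ->]; split; apply: cost_pt_le.
  by rewrite inE kC orbT.
by rewrite mem_head.
Qed.

Lemma sum_const (s : seq pt) (a : R) : \sum_(x <- s) a = (size s)%:R * a.
Proof.
elim: s => [|y s IH]; first by rewrite big_nil mul0r.
by rewrite big_cons IH /= mulrSr mulrDl mul1r addrC.
Qed.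

Lemma inner_id (s : seq pt) (f : pt -> R) (c : pt) :
  \sum_(x <- s) (f x - f c) ^+ 2 =
  \sum_(x <- s) f x ^+ 2 - 2 * f c * \sum_(x <- s) f x + (size s)%:R * f c ^+ 2.
Proof.
elim: s => [|y s IH]; first by rewrite !big_nil mulr0 mul0r; lra.
rewrite !big_cons IH /= mulrSr.
set A := \sum_(x <- s) f x ^+ 2; set B := \sum_(x <- s) f x.
ring.
Qed.

Lemma scalar_L1 (s : seq pt) (f : pt -> R) :
  \sum_(c <- s) \sum_(x <- s) (f x - f c) ^+ 2 <=
  2 * (size s)%:R * \sum_(x <- s) f x ^+ 2.
Proof.
under eq_bigr => c _ do rewrite inner_id.
rewrite big_split /= big_split /= sum_const sumrN.
rewrite -mulr_sumr.
set A := \sum_(x <- s) f x ^+ 2; set B := \sum_(x <- s) f x.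
have h : 0 <= B ^+ 2 by rewrite sqr_ge0.
rewrite -mulr_suml -mulr_sumr -/B.
nra.
Qed.

Lemma L1 (P : seq pt) (z : pt) :
  \sum_(c <- P) \sum_(x <- P) sqdist x c <=
  2 * (size P)%:R * \sum_(x <- P) sqdist x z.
Proof.
rewrite /sqdist.
under eq_bigr => c _ do rewrite exchange_big /=.
rewrite [X in X <= _]exchange_big /= [X in _ <= _ * X]exchange_big /= mulr_sumr.
apply: ler_sum => i _.
have e1 : forall x c : pt, (x - c) 0 i = (x 0 i - z 0 i) - (c 0 i - z 0 i).
  by move=> x c; rewrite !mxE; ring.
under eq_bigr => c _ do under eq_bigr => x _ do rewrite e1.
under [X in _ <= _ * X]eq_bigr => x _ do rewrite !mxE.
exact: (scalar_L1 P (fun y => y 0 i - z 0 i)).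
Qed.

Lemma claim (n w K S A t : R) : 0 < n -> 0 <= w -> 0 <= t -> t <= A ->
  K <= S -> K <= A -> n * w <= 2 * S + 2 * A -> 0 <= S ->
  n * w * (K - t) <= 4 * S * (A - t).
Proof.
move=> n0 w0 t0 tA KS KA hw S0.
have nw0 : 0 <= n * w by rewrite mulr_ge0 // ltW.
case: (leP A S) => AS.
  have h1 : n * w * (K - t) <= n * w * (A - t) by rewrite ler_wpM2l // lerD2r.
  apply: (le_trans h1).
  have h2 : n * w * (A - t) <= (2 * S + 2 * A) * (A - t) by rewrite ler_wpM2r // subr_ge0.
  apply: (le_trans h2); nra.
have h1 : n * w * (K - t) <= n * w * (S - t) by rewrite ler_wpM2l // lerD2r.
apply: (le_trans h1).
case: (leP S t) => St.
  have : n * w * (S - t) <= 0 by rewrite mulr_ge0_le0 // subr_le0.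
  have : 0 <= 4 * S * (A - t) by rewrite mulr_ge0 ?mulr_ge0 // subr_ge0.
  lra.
have h2 : n * w * (S - t) <= (2 * S + 2 * A) * (S - t) by rewrite ler_wpM2r // subr_ge0 ltW.
apply: (le_trans h2); nra.
Qed.

End Aux.
Unset Implicit Arguments.

Theorem mainTheorem3 (R : realType) (d : nat) (C P : seq 'rV[R]_d) :
  uniq C -> (0 < size C)%N ->
  uniq P -> (0 < size P)%N ->
  0 < cost P C ->
  expected_cost_after_D2 P C <= 5 * OPT1 P.
Proof.
move=> _ C0 _ P0 S0.
set n : R := (size P)%:R.
have n0 : 0 < n by rewrite /n ltr0n.
set S := cost P C.
set A := fun c => \sum_(x <- P) sqdist x c.
set Q := \sum_(c <- P) A c.
set t := Q / (2 * n).
have hw : forall c, n * cost_pt c C <= 2 * S + 2 * A c.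
  move=> c; rewrite /n -sum_const /S /cost /A mulr_sumr mulr_sumr -big_split /=.
  by apply: ler_sum => x _; apply: cost_tri.
have hK : forall c, cost P (c :: C) <= S /\ cost P (c :: C) <= A c.
  move=> c; split; apply: ler_sum => x _; by case: (@cost_cons_le _ _ x c C C0).
have ht : forall c, t <= A c.
  move=> c; rewrite /t ler_pdivrMr ?mulr_gt0 // mulrC; exact: L1.
have Q0 : 0 <= Q by apply: sumr_ge0 => c _; apply: sumr_ge0 => x _; apply: sqdist_ge0.
have t0 : 0 <= t by rewrite /t divr_ge0 // mulr_ge0 // ltW.
have hsum : \sum_(c <- P) n * cost_pt c C * (cost P (c :: C) - t) <=
            \sum_(c <- P) 4 * S * (A c - t).
  apply: ler_sum => c _; case: (hK c) => h1 h2.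
  apply: claim => //; [exact: cost_pt_ge0 | exact: ltW].
have eL : \sum_(c <- P) n * cost_pt c C * (cost P (c :: C) - t) =
   n * \sum_(c <- P) cost_pt c C * cost P (c :: C) - n * t * S.
  rewrite (eq_bigr (fun c => n * (cost_pt c C * cost P (c :: C)) - (n * t) * cost_pt c C));
    last by move=> c _; ring.
  by rewrite big_split /= sumrN -!mulr_sumr.
have eR : \sum_(c <- P) 4 * S * (A c - t) = 4 * S * Q - 4 * S * (n * t).
  under eq_bigr => c _ do rewrite mulrBr.
  rewrite big_split /= sumrN -mulr_sumr sum_const -/n -/Q; ring.
have ent : n * t = Q / 2.
  rewrite /t; field; apply/eqP; lra.
have hE : expected_cost_after_D2 P C = (\sum_(c <- P) cost_pt c C * cost P (c :: C)) / S.
  rewrite /expected_cost_after_D2 mulr_suml; apply: eq_bigr => c _.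
  by rewrite mulrAC.
have key : expected_cost_after_D2 P C <= 5 * Q / (2 * n).
  set WK := \sum_(c <- P) cost_pt c C * cost P (c :: C).
  rewrite hE.
  have h1 : n * WK <= 5 / 2 * (Q * S).
    move: hsum; rewrite eL eR ent => h.
    have e3 : n * WK = (n * WK - Q / 2 * S) + Q / 2 * S by ring.
    rewrite e3; apply: (@le_trans _ _ (4 * S * Q - 4 * S * (Q / 2) + Q / 2 * S)); first by rewrite lerD2r.
    rewrite (_ : 4 * S * Q - 4 * S * (Q / 2) + Q / 2 * S = 5 / 2 * (Q * S)) //.
    by field.
  rewrite ler_pdivrMr // mulrAC ler_pdivlMr ?mulr_gt0 //.
  rewrite (_ : WK * (2 * n) = 2 * (n * WK)); last by ring.
  rewrite (_ : 5 * Q * S = 2 * (5 / 2 * (Q * S))); last by field.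
  by rewrite ler_pM2l.
have : expected_cost_after_D2 P C / 5 <= OPT1 P.
  apply: lb_le_inf.
    by exists (cost P [:: 0]); exists 0.
  move=> y [z _ <-].
  have ec : cost P [:: z] = \sum_(x <- P) sqdist x z.
    by apply: eq_bigr => x _; rewrite /cost_pt /= big_cons big_nil minxx.
  rewrite ec ler_pdivrMr //.
  apply: (le_trans key).
  rewrite ler_pdivrMr ?mulr_gt0 //.
  have := @L1 _ _ P z; rewrite -/n => hL.
  have hQ : Q <= 2 * n * \sum_(x <- P) sqdist x z := hL.
  rewrite (_ : (\sum_(x <- P) sqdist x z) * 5 * (2 * n) =
     5 * (2 * n * \sum_(x <- P) sqdist x z)); last by ring.
  by rewrite ler_pM2l.
lra.
Qed.
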